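(* Let $\alpha\ge\tfrac12$. There is a constant $C>0$ depending only on $\alpha$ such that for every $f\in(L^\infty,\ell^1)(\mathbb{R}_+,*_\alpha)$ and every $y\in\mathbb{R}_+$, $\|\tau_yf\|_{\infty,1}\le C\,\|f\|_{\infty,1}.$
   Context: Fix $\alpha\geq\tfrac12$. The Bessel–Kingman hypergroup is $(\mathbb{R}_+,*_\alpha)$ with Haar measure $\omega_\alpha(dz)=z^{2\alpha+1}dz$ and, for $x,y>0$, $\varepsilon_x*_\alpha\varepsilon_y(f)=\int_{|x-y|}^{x+y}K_\alpha(x,y,z)f(z)z^{2\alpha+1}dz$ with $K_\alpha(x,y,z)=C_\Gamma\frac{[(z^2-(x-y)^2)((x+y)^2-z^2)]^{\alpha-1/2}}{(xyz)^{2\alpha}}$, $C_\Gamma=\frac{\Gamma(\alpha+1)}{\Gamma(1/2)\Gamma(\alpha+1/2)2^{2\alpha-1}}$; $\varepsilon_0$ is the identity. Translation: $\tau_yf(x)=\varepsilon_x*_\alpha\varepsilon_y(f)$. Let $I_n=[n-1,n)$, $\omega_n=\omega_\alpha(I_n)$, $\|f\|_{\infty,1}=\sum_{n\ge1}\omega_n\sup_{x\in I_n}|f(x)|$, and $(L^\infty,\ell^1)(\mathbb{R}_+,*_\alpha)=\{f \text{ measurable}:\|f\|_{\infty,1}<\infty\}$. *)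

(* Defs.v *)
From Stdlib Require Import Reals Lra Arith Factorial ClassicalEpsilon.
Open Scope R_scope.

(* supremum / infimum of a set of reals (0 by default if it does not exist) *)
Definition Rsup (E : R -> Prop) : R :=
  match excluded_middle_informative (exists l, is_lub E l) with
  | left H => proj1_sig (constructive_indefinite_description _ H)
  | right _ => 0
  end.
Definition Rinf (E : R -> Prop) : R := - Rsup (fun v => E (- v)).

(* real powers b^e for b >= 0 (with 0^e = 0 for e <> 0, 0^0 = 1) *)
Definition rpow (b e : R) : R :=
  if Rlt_dec 0 b then Rpower b e
  else if Req_EM_T e 0 then 1 else 0.

Definition cover_len (T : R -> Prop) (L : R) : Prop :=
  exists a b : nat -> R,
    (forall k, a k <= b k) /\
    (forall x, T x -> exists k, a k < x < b k) /\
    infinite_sum (fun k => b k - a k) L.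

Definition outer (T : R -> Prop) : R := Rinf (cover_len T).

(* Caratheodory measurability (only test sets of finite outer measure matter) *)
Definition Lmeas (A : R -> Prop) : Prop :=
  forall T L, cover_len T L ->
    outer (fun x => T x /\ A x) + outer (fun x => T x /\ ~ A x) <= L.

Definition meas_fun_Rplus (f : R -> R) : Prop :=
  forall a, Lmeas (fun x => 0 <= x /\ a < f x).

Definition meas_partition (c d : R) (k : nat) (E : nat -> R -> Prop) : Prop :=
  (forall i, (i <= k)%nat -> Lmeas (E i)) /\
  (forall i x, (i <= k)%nat -> E i x -> c <= x <= d) /\
  (forall x, c <= x <= d -> exists i, (i <= k)%nat /\ E i x) /\
  (forall i j x, (i <= k)%nat -> (j <= k)%nat -> E i x -> E j x -> i = j).

(* Lebesgue integral over [c,d] of a bounded measurable g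
   (= supremum of the lower Lebesgue sums) *)
Definition Lint (g : R -> R) (c d : R) : R :=
  Rsup (fun s => exists k E, meas_partition c d k E /\
          s = sum_f_R0 (fun i => Rinf (fun v => exists x, E i x /\ v = g x)
                                   * outer (E i)) k).

Fixpoint poch (s : R) (n : nat) : R :=
  match n with O => s | S m => poch s m * (s + INR (S m)) end.
Definition Gamma (s : R) : R :=
  epsilon (inhabits 0)
    (fun l => Un_cv (fun n => INR (fact n) * rpow (INR n) s / poch s n) l).

Definition CGamma (a : R) : R :=
  Gamma (a + 1) / (Gamma (1/2) * Gamma (a + 1/2) * rpow 2 (2 * a - 1)).

Definition Kern (a x y z : R) : R :=
  CGamma a * rpow ((z ^ 2 - (x - y) ^ 2) * ((x + y) ^ 2 - z ^ 2)) (a - 1/2)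
    / rpow (x * y * z) (2 * a).

(* tau_y f (x) = (eps_x * eps_y)(f), eps_0 being the identity *)
Definition tau (a y : R) (f : R -> R) (x : R) : R :=
  if Req_EM_T y 0 then f x
  else if Req_EM_T x 0 then f y
  else Lint (fun z => Kern a x y z * f z * rpow z (2 * a + 1)) (Rabs (x - y)) (x + y).

(* omega_a(I_{n+1}) = omega_a([n, n+1)) = int_n^{n+1} z^{2a+1} dz *)
Definition omega (a : R) (n : nat) : R :=
  (rpow (INR n + 1) (2 * a + 2) - rpow (INR n) (2 * a + 2)) / (2 * a + 2).

(* ||f||_{infty,1} = N (finite): s n = sup_{x in [n,n+1)} |f x| exists for all n,
   and sum_n omega(I_{n+1}) s n = N *)
Definition is_norm (a : R) (f : R -> R) (N : R) : Prop :=
  exists s : nat -> R,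
    (forall n, is_lub (fun v => exists x, INR n <= x < INR n + 1 /\ v = Rabs (f x)) (s n)) /\
    infinite_sum (fun n => omega a n * s n) N.

(* Main.v *)
Require Import Defs.
From Stdlib Require Import Reals Lra Lia Arith ZArith Factorial ClassicalEpsilon Classical.
From Stdlib Require Import FunctionalExtensionality PropExtensionality.
Open Scope R_scope.

Lemma isum_Un (u : nat -> R) l : infinite_sum u l <-> Un_cv (sum_f_R0 u) l.
Proof. split; intro H; exact H. Qed.

Lemma isum_le (u w : nat -> R) U W :
  infinite_sum u U -> infinite_sum w W -> (forall k, u k <= w k) -> U <= W.
Proof.
  intros Hu Hw Hle. exact (Rle_cv_lim (fun n => sum_growing u w n Hle) Hu Hw).
Qed.

Lemma isum_nonneg (u : nat -> R) U : infinite_sum u U -> (forall k, 0 <= u k) -> 0 <= U.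
Proof.
  intros Hu Hp. apply (isum_le (fun _ => 0) u 0 U); auto.
  intros eps He. exists 0%nat. intros n _. unfold Rdist.
  assert (sum_f_R0 (fun _ => 0) n = 0).
  { induction n; simpl; auto. rewrite IHn; ring. }
  rewrite H. replace (0-0) with 0 by ring. rewrite Rabs_R0. lra.
Qed.

Lemma isum_comp (u w : nat -> R) W :
  (forall k, 0 <= u k <= w k) -> infinite_sum w W ->
  exists U, infinite_sum u U /\ U <= W.
Proof.
  intros H Hw. destruct (Rseries_CV_comp u w H (exist _ W Hw)) as [U HU].
  exists U. split; auto. apply (isum_le u w); auto. intro k; apply H.
Qed.

Lemma isum_plus (u v : nat -> R) U V :
  infinite_sum u U -> infinite_sum v V -> infinite_sum (fun k => u k + v k) (U + V).
Proof.
  intros Hu Hv. unfold infinite_sum.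
  intros eps He.
  destruct (CV_plus (sum_f_R0 u) (sum_f_R0 v) U V Hu Hv eps He) as [N HN].
  exists N. intros n Hn. rewrite plus_sum. apply HN; auto.
Qed.

Lemma isum_scal (u : nat -> R) U c :
  infinite_sum u U -> infinite_sum (fun k => c * u k) (c * U).
Proof.
  intros Hu. intros eps He.
  assert (Hc : Un_cv (fun _ => c) c).
  { intros e He'. exists 0%nat. intros. unfold Rdist. replace (c-c) with 0 by ring.
    rewrite Rabs_R0; lra. }
  destruct (CV_mult (fun _ => c) (sum_f_R0 u) c U Hc Hu eps He) as [N HN].
  exists N. intros n Hn. specialize (HN n Hn). simpl in HN.
  replace (sum_f_R0 (fun k => c * u k) n) with (c * sum_f_R0 u n); auto.
  rewrite scal_sum. apply sum_eq. intros; ring.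
Qed.

Definition interleave (u v : nat -> R) (k : nat) : R :=
  if Nat.even k then u (Nat.div2 k) else v (Nat.div2 k).

Lemma interleave_sum_odd u v K :
  sum_f_R0 (interleave u v) (S (2 * K)) = sum_f_R0 u K + sum_f_R0 v K.
Proof.
  induction K.
  - simpl. unfold interleave. simpl. ring.
  - replace (S (2 * S K)) with (S (S (S (2 * K)))) by lia.
    rewrite tech5, tech5, IHK, tech5.
    unfold interleave.
    replace (S (S (2 * K))) with (2 * S K)%nat by lia.
    rewrite Nat.div2_double, Nat.div2_succ_double.
    rewrite Nat.even_succ, Nat.odd_mul, Nat.even_mul. simpl. ring.
Qed.

Lemma interleave_sum_even u v K :
  sum_f_R0 (interleave u v) (2 * S K) = sum_f_R0 u (S K) + sum_f_R0 v K.
Proof.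
  replace (2 * S K)%nat with (S (S (2 * K)))%nat by lia.
  rewrite tech5, interleave_sum_odd, tech5.
  unfold interleave. replace (S (S (2 * K))) with (2 * S K)%nat by lia.
  rewrite Nat.div2_double. rewrite Nat.even_mul. simpl. ring.
Qed.

Lemma isum_interleave (u v : nat -> R) U V :
  infinite_sum u U -> infinite_sum v V -> infinite_sum (interleave u v) (U + V).
Proof.
  intros Hu Hv eps He.
  destruct (Hu (eps/2)) as [N1 H1]; [lra|].
  destruct (Hv (eps/2)) as [N2 H2]; [lra|].
  exists (2 * (N1 + N2) + 2)%nat. intros n Hn.
  destruct (Nat.Even_or_Odd n) as [[K HK]|[K HK]].
  - subst n. destruct K as [|K]; [lia|].
    rewrite interleave_sum_even.
    specialize (H1 (S K) ltac:(lia)). specialize (H2 K ltac:(lia)).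
    unfold Rdist in *.
    replace (sum_f_R0 u (S K) + sum_f_R0 v K - (U + V)) with
      ((sum_f_R0 u (S K) - U) + (sum_f_R0 v K - V)) by ring.
    eapply Rle_lt_trans; [apply Rabs_triang|]. lra.
  - subst n. replace (2 * K + 1)%nat with (S (2 * K)) by lia.
    rewrite interleave_sum_odd.
    specialize (H1 K ltac:(lia)). specialize (H2 K ltac:(lia)).
    unfold Rdist in *.
    replace (sum_f_R0 u K + sum_f_R0 v K - (U + V)) with
      ((sum_f_R0 u K - U) + (sum_f_R0 v K - V)) by ring.
    eapply Rle_lt_trans; [apply Rabs_triang|]. lra.
Qed.

Lemma Rsup_lub E l : is_lub E l -> Rsup E = l.
Proof.
  intro H. unfold Rsup. destruct excluded_middle_informative as [e|n].
  - destruct (constructive_indefinite_description _ e) as [l' Hl']. simpl.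
    eapply is_lub_u; eauto.
  - exfalso; apply n; eauto.
Qed.

Lemma Rsup_nolub E : ~ (exists l, is_lub E l) -> Rsup E = 0.
Proof.
  intro H. unfold Rsup. destruct excluded_middle_informative as [e|n]; auto.
  contradiction.
Qed.

Lemma Rsup_cases E : (exists l, is_lub E l /\ Rsup E = l) \/ Rsup E = 0.
Proof.
  destruct (classic (exists l, is_lub E l)) as [[l Hl]|Hn].
  - left. exists l. split; auto. apply Rsup_lub; auto.
  - right. apply Rsup_nolub; auto.
Qed.

Lemma cover_nonneg T L : cover_len T L -> 0 <= L.
Proof.
  intros [a [b [Hab [_ Hs]]]]. apply (isum_nonneg _ _ Hs). intro k. specialize (Hab k). lra.
Qed.

Lemma outer_nonneg T : 0 <= outer T.
Proof.
  unfold outer, Rinf.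
  destruct (Rsup_cases (fun v => cover_len T (- v))) as [[l [Hl ->]] | ->]; [|lra].
  assert (l <= 0).
  { apply Hl. intros v Hv. apply cover_nonneg in Hv. lra. }
  lra.
Qed.

Lemma outer_le_cover T L : cover_len T L -> outer T <= L.
Proof.
  intro HL. unfold outer, Rinf.
  destruct (Rsup_cases (fun v => cover_len T (- v))) as [[l [Hl ->]] | ->].
  - assert (-L <= l). { apply Hl. rewrite Ropp_involutive. auto. } lra.
  - apply cover_nonneg in HL; lra.
Qed.

Lemma outer_approx T : (exists L, cover_len T L) ->
  forall eps, 0 < eps -> exists L, cover_len T L /\ L <= outer T + eps.
Proof.
  intros [L0 H0] eps He.
  assert (Hb : bound (fun v => cover_len T (- v))).
  { exists 0. intros v Hv. apply cover_nonneg in Hv. lra. }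
  assert (Hne : exists v, cover_len T (- v)).
  { exists (-L0). rewrite Ropp_involutive. auto. }
  destruct (completeness _ Hb Hne) as [l Hl].
  assert (Ho : outer T = - l). { unfold outer, Rinf. rewrite (Rsup_lub _ l Hl). auto. }
  destruct (classic (exists L, cover_len T L /\ L <= outer T + eps)) as [E|E]; auto.
  exfalso.
  assert (l <= l - eps).
  { apply Hl. intros v Hv. destruct (Rle_dec v (l - eps)); auto.
    exfalso. apply E. exists (-v). split; auto. lra. }
  lra.
Qed.

Lemma cover_mono A B L : (forall x, A x -> B x) -> cover_len B L -> cover_len A L.
Proof.
  intros H [a [b [H1 [H2 H3]]]]. exists a, b. repeat split; auto.
Qed.

Lemma outer_mono A B : (forall x, A x -> B x) -> (exists L, cover_len B L) ->
  outer A <= outer B.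
Proof.
  intros H HB. apply Rle_plus_epsilon. intros eps He.
  destruct (outer_approx B HB eps He) as [L [HL HL']].
  apply Rle_trans with L; auto. apply outer_le_cover. eapply cover_mono; eauto.
Qed.

Lemma outer_ext A B : (forall x, A x <-> B x) -> outer A = outer B.
Proof.
  intro H. assert (A = B).
  { apply functional_extensionality. intro x. apply propositional_extensionality. auto. }
  subst; auto.
Qed.

Definition first_only (v : R) (k : nat) : R := match k with O => v | _ => 0 end.

Lemma isum_first v : infinite_sum (first_only v) v.
Proof.
  intros eps He. exists 0%nat. intros n _.
  assert (sum_f_R0 (first_only v) n = v).
  { induction n; simpl; auto. rewrite IHn. simpl. ring. }
  rewrite H. unfold Rdist. replace (v - v) with 0 by ring. rewrite Rabs_R0; lra.
Qed.

Lemma cover_empty A : (forall x, ~ A x) -> cover_len A 0.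
Proof.
  intro H. exists (fun _ => 0), (fun _ => 0). split; [|split].
  - intros; lra.
  - intros y Hy. exfalso; eapply H; eauto.
  - replace (fun _ : nat => 0 - 0) with (first_only 0).
    + apply isum_first.
    + apply functional_extensionality. intros [|k]; simpl; ring.
Qed.

Lemma outer_empty A : (forall x, ~ A x) -> outer A = 0.
Proof.
  intro H. apply Rle_antisym; [|apply outer_nonneg].
  apply outer_le_cover, cover_empty; auto.
Qed.

Lemma cover_box A p q eps : (forall x, A x -> p <= x <= q) -> 0 < eps ->
  exists L, cover_len A L /\ L <= Rmax 0 (q - p) + eps.
Proof.
  intros H He. destruct (Rle_dec p q) as [Hpq|Hpq].
  - exists (q - p + eps). split.
    + exists (first_only (p - eps/2)), (first_only (q + eps/2)). repeat split.
      * intros [|k]; simpl; lra.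
      * intros x Hx. exists 0%nat. simpl. specialize (H x Hx). lra.
      * replace (fun k => first_only (q + eps / 2) k - first_only (p - eps / 2) k)
          with (first_only (q - p + eps)).
        -- apply isum_first.
        -- apply functional_extensionality. intros [|k]; simpl; lra.
    + unfold Rmax; destruct Rle_dec; lra.
  - exists 0. split.
    + apply cover_empty. intros x Hx. specialize (H x Hx). lra.
    + unfold Rmax; destruct Rle_dec; lra.
Qed.

Lemma has_cover_box A p q : (forall x, A x -> p <= x <= q) -> exists L, cover_len A L.
Proof.
  intro H. destruct (cover_box A p q 1 H) as [L [HL _]]; [lra|]. eauto.
Qed.

Lemma outer_box A p q : (forall x, A x -> p <= x <= q) -> outer A <= Rmax 0 (q - p).
Proof.
  intro H. apply Rle_plus_epsilon. intros eps He.
  destruct (cover_box A p q eps H He) as [L [HL HL']].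
  apply outer_le_cover in HL. lra.
Qed.

Lemma outer_sub2 A B1 B2 : (forall x, A x -> B1 x \/ B2 x) ->
  (exists L, cover_len B1 L) -> (exists L, cover_len B2 L) ->
  outer A <= outer B1 + outer B2.
Proof.
  intros H H1 H2. apply Rle_plus_epsilon. intros eps He.
  destruct (outer_approx B1 H1 (eps/2)) as [L1 [[a1 [b1 [Ha1 [Hc1 Hs1]]]] HL1]]; [lra|].
  destruct (outer_approx B2 H2 (eps/2)) as [L2 [[a2 [b2 [Ha2 [Hc2 Hs2]]]] HL2]]; [lra|].
  assert (cover_len A (L1 + L2)).
  { exists (interleave a1 a2), (interleave b1 b2). repeat split.
    - intro k. unfold interleave. destruct (Nat.even k); auto.
    - intros x Hx. destruct (H x Hx) as [Hb|Hb].
      + destruct (Hc1 x Hb) as [k Hk]. exists (2 * k)%nat. unfold interleave.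
        rewrite Nat.even_mul, Nat.div2_double. simpl. auto.
      + destruct (Hc2 x Hb) as [k Hk]. exists (S (2 * k))%nat. unfold interleave.
        rewrite Nat.even_succ, Nat.odd_mul, Nat.div2_succ_double. simpl. auto.
    - replace (fun k => interleave b1 b2 k - interleave a1 a2 k) with
        (interleave (fun k => b1 k - a1 k) (fun k => b2 k - a2 k)).
      + apply isum_interleave; auto.
      + apply functional_extensionality. intro k. unfold interleave.
        destruct (Nat.even k); auto. }
  apply outer_le_cover in H0. lra.
Qed.

Lemma piece_ineq a b p q d : a <= b -> 0 <= d -> p <= q ->
  (Rmax (Rmax a (p - d)) (Rmin b (q + d)) - Rmax a (p - d)) +
  (Rmax a (Rmin b (p + d)) - a) + (b - Rmin b (Rmax a (q - d))) <= (b - a) + 4 * d.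
Proof.
  intros. unfold Rmax, Rmin. repeat destruct Rle_dec; lra.
Qed.

Lemma piece_nonneg a b p q d : a <= b ->
  0 <= Rmax (Rmax a (p - d)) (Rmin b (q + d)) - Rmax a (p - d) /\
  0 <= Rmax a (Rmin b (p + d)) - a /\ 0 <= b - Rmin b (Rmax a (q - d)).
Proof.
  intros. unfold Rmax, Rmin. repeat destruct Rle_dec; lra.
Qed.

Lemma interval_meas A p q : (forall x, A x -> p <= x <= q) ->
  (forall x, p < x < q -> A x) -> Lmeas A.
Proof.
  intros HA1 HA2 T L HL.
  destruct (Rle_dec p q) as [Hpq|Hpq].
  2:{ rewrite (outer_empty (fun x => T x /\ A x)).
      - apply cover_nonneg in HL as H0.
        assert (outer (fun x => T x /\ ~ A x) <= L).
        { apply outer_le_cover. eapply cover_mono; [|exact HL]. intros x [Hx _]; auto. }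
        lra.
      - intros x [_ Hx]. specialize (HA1 x Hx). lra. }
  destruct HL as [a [b [Hab [Hcov Hs]]]].
  assert (HL0 : 0 <= L) by (apply (isum_nonneg _ _ Hs); intro k; specialize (Hab k); lra).
  apply Rle_plus_epsilon. intros eps He.
  set (eta := eps / (4 * (L + 1))).
  assert (Heta : 0 < eta) by (unfold eta; apply Rdiv_lt_0_compat; lra).
  assert (Heta2 : 4 * eta * L <= eps).
  { unfold eta. apply Rmult_le_reg_r with (L + 1); [lra|].
    field_simplify; [|lra]. nra. }
  set (d := fun k => eta * (b k - a k)).
  assert (Hd : forall k, 0 <= d k) by (intro k; unfold d; specialize (Hab k); nra).
  set (a1 := fun k => Rmax (a k) (p - d k)).
  set (b1 := fun k => Rmax (a1 k) (Rmin (b k) (q + d k))).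
  set (b2 := fun k => Rmax (a k) (Rmin (b k) (p + d k))).
  set (a3 := fun k => Rmin (b k) (Rmax (a k) (q - d k))).
  set (w := fun k => (1 + 4 * eta) * (b k - a k)).
  assert (Hw : infinite_sum w ((1 + 4 * eta) * L)) by (apply isum_scal; auto).
  assert (Hpw : forall k, (b1 k - a1 k) + (b2 k - a k) + (b k - a3 k) <= w k).
  { intro k. unfold w, b1, a1, b2, a3.
    pose proof (piece_ineq (a k) (b k) p q (d k) (Hab k) (Hd k) Hpq). unfold d in *. lra. }
  assert (Hnn : forall k, 0 <= b1 k - a1 k /\ 0 <= b2 k - a k /\ 0 <= b k - a3 k).
  { intro k. apply piece_nonneg; auto. }
  destruct (isum_comp (fun k => b1 k - a1 k) w _ ltac:(intro k; specialize (Hpw k); specialize (Hnn k); lra) Hw) as [L1 [HL1 _]].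
  destruct (isum_comp (fun k => b2 k - a k) w _ ltac:(intro k; specialize (Hpw k); specialize (Hnn k); lra) Hw) as [L2 [HL2 _]].
  destruct (isum_comp (fun k => b k - a3 k) w _ ltac:(intro k; specialize (Hpw k); specialize (Hnn k); lra) Hw) as [L3 [HL3 _]].
  assert (Htot : L1 + L2 + L3 <= (1 + 4 * eta) * L).
  { apply (isum_le (fun k => (b1 k - a1 k) + (b2 k - a k) + (b k - a3 k)) w); auto.
    apply isum_plus; auto. apply isum_plus; auto. }
  assert (C1 : cover_len (fun x => T x /\ A x) L1).
  { exists a1, b1. split; [|split]; auto.
    - intro k; specialize (Hnn k); lra.
    - intros x [Hx Ax]. destruct (Hcov x Hx) as [k Hk]. exists k.
      specialize (HA1 x Ax). assert (0 < d k) by (unfold d; nra).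
      unfold b1, a1. unfold Rmax, Rmin. repeat destruct Rle_dec; lra. }
  assert (C2 : cover_len (fun x => T x /\ ~ A x) (L2 + L3)).
  { exists (interleave a a3), (interleave b2 b). split; [|split].
    - intro k. unfold interleave. destruct (Nat.even k); specialize (Hnn (Nat.div2 k)); lra.
    - intros x [Hx Ax]. destruct (Hcov x Hx) as [k Hk].
      assert (0 < d k) by (unfold d; nra).
      assert (Hx' : x <= p \/ q <= x).
      { destruct (Rle_dec x p); auto. destruct (Rle_dec q x); auto.
        exfalso; apply Ax; apply HA2; lra. }
      destruct Hx' as [Hx'|Hx'].
      + exists (2 * k)%nat. unfold interleave.
        rewrite Nat.even_mul, Nat.div2_double. simpl.
        unfold b2. unfold Rmax, Rmin. repeat destruct Rle_dec; lra.
      + exists (S (2 * k))%nat. unfold interleave.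
        rewrite Nat.even_succ, Nat.odd_mul, Nat.div2_succ_double. simpl.
        unfold a3. unfold Rmax, Rmin. repeat destruct Rle_dec; lra.
    - replace (fun k => interleave b2 b k - interleave a a3 k) with
        (interleave (fun k => b2 k - a k) (fun k => b k - a3 k)).
      + apply isum_interleave; auto.
      + apply functional_extensionality. intro k. unfold interleave.
        destruct (Nat.even k); auto. }
  apply outer_le_cover in C1. apply outer_le_cover in C2. nra.
Qed.

Lemma meas_split A T : Lmeas A -> (exists L, cover_len T L) ->
  outer (fun x => T x /\ A x) + outer (fun x => T x /\ ~ A x) <= outer T.
Proof.
  intros HA HT. apply Rle_plus_epsilon. intros eps He.
  destruct (outer_approx T HT eps He) as [L [HL HL']].
  specialize (HA T L HL). lra.
Qed.

Lemma carat_sum (E : nat -> R -> Prop) k :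
  (forall i, (i <= k)%nat -> Lmeas (E i)) ->
  (forall i j x, (i <= k)%nat -> (j <= k)%nat -> E i x -> E j x -> i = j) ->
  forall T, (exists L, cover_len T L) ->
  sum_f_R0 (fun i => outer (fun x => T x /\ E i x)) k <= outer T.
Proof.
  induction k; intros Hm Hd T HT.
  - simpl. pose proof (meas_split (E 0%nat) T (Hm 0%nat (le_n _)) HT).
    pose proof (outer_nonneg (fun x => T x /\ ~ E 0%nat x)). lra.
  - rewrite tech5.
    pose proof (meas_split (E (S k)) T (Hm _ (le_n _)) HT).
    assert (IH : sum_f_R0 (fun i => outer (fun x => (T x /\ ~ E (S k) x) /\ E i x)) k
                 <= outer (fun x => T x /\ ~ E (S k) x)).
    { apply IHk.
      - intros; apply Hm; lia.
      - intros; eapply Hd; eauto; lia.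
      - destruct HT as [L HL]. exists L. eapply cover_mono; [|exact HL]. intros x [? ?]; auto. }
    replace (sum_f_R0 (fun i => outer (fun x => T x /\ E i x)) k) with
      (sum_f_R0 (fun i => outer (fun x => (T x /\ ~ E (S k) x) /\ E i x)) k).
    + lra.
    + apply sum_eq. intros i Hi. apply outer_ext. intro x. split.
      * intros [[? ?] ?]; auto.
      * intros [Tx Ex]. split; auto. split; auto. intro Hx.
        assert (i = S k) by (eapply Hd; eauto). lia.
Qed.

Lemma sum_swap (F : nat -> nat -> R) k n :
  sum_f_R0 (fun i => sum_f_R0 (fun m => F i m) n) k =
  sum_f_R0 (fun m => sum_f_R0 (fun i => F i m) k) n.
Proof.
  induction k.
  - simpl. apply sum_eq. intros; simpl; auto.
  - rewrite tech5, IHk. rewrite <- plus_sum. apply sum_eq. intros; rewrite tech5; auto.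
Qed.

Lemma sum_mult_l (u : nat -> R) c n : c * sum_f_R0 u n = sum_f_R0 (fun i => c * u i) n.
Proof. rewrite scal_sum. apply sum_eq. intros; ring. Qed.

Lemma sum_opp (u : nat -> R) n : sum_f_R0 (fun i => - u i) n = - sum_f_R0 u n.
Proof. induction n; simpl; auto. rewrite IHn; ring. Qed.

Lemma floor_nat x : 0 <= x -> exists m : nat, INR m <= x < INR m + 1.
Proof.
  intro Hx. destruct (archimed x) as [H1 H2].
  assert (Hu : (1 <= up x)%Z).
  { apply le_IZR. simpl. assert (0 < IZR (up x)) by lra.
    assert (0 < up x)%Z by (apply lt_IZR; auto). apply IZR_le. lia. }
  exists (Z.to_nat (up x - 1)).
  rewrite INR_IZR_INZ, Z2Nat.id by lia. rewrite minus_IZR. simpl. lra.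
Qed.

Lemma nat_cell_unique (i j : nat) x :
  INR i <= x < INR i + 1 -> INR j <= x < INR j + 1 -> i = j.
Proof.
  intros [H1 H2] [H3 H4].
  assert (INR i < INR (j + 1)) by (rewrite plus_INR; simpl; lra).
  assert (INR j < INR (i + 1)) by (rewrite plus_INR; simpl; lra).
  apply INR_lt in H. apply INR_lt in H0. lia.
Qed.

Lemma nat_cell_le (i R0 : nat) x :
  INR i <= x -> x < INR R0 + 1 -> (i <= R0)%nat.
Proof.
  intros H1 H2. assert (INR i < INR (R0 + 1)) by (rewrite plus_INR; simpl; lra).
  apply INR_lt in H. lia.
Qed.

Lemma Rinf_le_pt (P : R -> Prop) (g : R -> R) z :
  P z -> Rinf (fun v => exists x, P x /\ v = g x) <= Rmax 0 (g z).
Proof.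
  intro Hz. unfold Rinf.
  destruct (Rsup_cases (fun v => exists x, P x /\ - v = g x)) as [[l [Hl ->]] | ->].
  - assert (- g z <= l). { apply Hl. exists z. split; auto. ring. }
    unfold Rmax; destruct Rle_dec; lra.
  - unfold Rmax; destruct Rle_dec; lra.
Qed.

Lemma Rinf_ge (F : R -> Prop) G : 0 <= G -> (forall v, F v -> - G <= v) -> - G <= Rinf F.
Proof.
  intros HG H. unfold Rinf.
  destruct (Rsup_cases (fun v => F (- v))) as [[l [Hl ->]] | ->].
  - assert (l <= G). { apply Hl. intros v Hv. specialize (H _ Hv). lra. } lra.
  - lra.
Qed.

Lemma outer_subn (B : nat -> R -> Prop) p q :
  (forall m x, B m x -> p <= x <= q) ->
  forall n (A : R -> Prop), (forall x, A x -> exists m, (m <= n)%nat /\ B m x) ->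
  outer A <= sum_f_R0 (fun m => outer (B m)) n.
Proof.
  intros HB. induction n; intros A HA.
  - simpl. apply outer_mono.
    + intros x Hx. destruct (HA x Hx) as [m [Hm Hb]]. replace m with 0%nat in Hb by lia. auto.
    + apply (has_cover_box _ p q). intros x; apply HB.
  - rewrite tech5.
    apply Rle_trans with (outer (fun x => exists m, (m <= n)%nat /\ B m x) + outer (B (S n))).
    + apply outer_sub2.
      * intros x Hx. destruct (HA x Hx) as [m [Hm Hb]].
        destruct (Nat.eq_dec m (S n)). { subst; auto. } left. exists m. split; auto; lia.
      * apply (has_cover_box _ p q). intros x [m [_ Hm]]. eauto.
      * apply (has_cover_box _ p q). eauto.
    + apply Rplus_le_compat_r. apply IHn. auto.
Qed.

Definition Jset (c d : R) (m : nat) : R -> Prop :=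
  fun z => c <= z <= d /\ INR m <= z < INR m + 1.
Definition jlen (c d : R) (m : nat) : R :=
  Rmax 0 (Rmin d (INR m + 1) - Rmax c (INR m)).

Lemma Jset_box c d m z : Jset c d m z -> Rmax c (INR m) <= z <= Rmin d (INR m + 1).
Proof.
  intros [[? ?] [? ?]]. unfold Rmax, Rmin. repeat destruct Rle_dec; lra.
Qed.

Lemma Jset_meas c d m : Lmeas (Jset c d m).
Proof.
  apply (interval_meas _ (Rmax c (INR m)) (Rmin d (INR m + 1))).
  - apply Jset_box.
  - intros x Hx. unfold Jset. revert Hx. unfold Rmax, Rmin. repeat destruct Rle_dec; lra.
Qed.

Lemma Jset_outer c d m : outer (Jset c d m) <= jlen c d m.
Proof. apply outer_box. apply Jset_box. Qed.

Lemma jlen_nonneg c d m : 0 <= jlen c d m.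
Proof. unfold jlen, Rmax. destruct Rle_dec; lra. Qed.

Lemma Lint_bound (g : R -> R) c d (R0 : nat) (G : nat -> R) :
  0 <= c <= d -> d < INR R0 + 1 -> (forall m, 0 <= G m) ->
  (forall m z, c <= z <= d -> INR m <= z < INR m + 1 -> Rabs (g z) <= G m) ->
  Rabs (Lint g c d) <= sum_f_R0 (fun m => G m * jlen c d m) R0.
Proof.
  intros Hcd HR0 HG Hg.
  set (B := sum_f_R0 (fun m => G m * jlen c d m) R0).
  set (S := fun s => exists k E, meas_partition c d k E /\
          s = sum_f_R0 (fun i => Rinf (fun v => exists x, E i x /\ v = g x)
                                   * outer (E i)) k).
  assert (HU : forall s, S s -> s <= B).
  { intros s [k [E [[Hm [Hin [Hcv Hdj]]] ->]]].
    set (inf := fun i => Rinf (fun v => exists x, E i x /\ v = g x)).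
    apply Rle_trans with
      (sum_f_R0 (fun i => sum_f_R0 (fun m => G m * outer (fun x => Jset c d m x /\ E i x)) R0) k).
    - apply sum_Rle. intros i Hi. fold (inf i).
      apply Rle_trans with (Rmax 0 (inf i) * outer (E i)).
      { apply Rmult_le_compat_r; [apply outer_nonneg|]. apply Rmax_r. }
      apply Rle_trans with (Rmax 0 (inf i) *
         sum_f_R0 (fun m => outer (fun x => Jset c d m x /\ E i x)) R0).
      { apply Rmult_le_compat_l; [apply Rmax_l|].
        apply (outer_subn _ c d).
        - intros m x [[Hx _] _]; auto.
        - intros x Hx. destruct (Hin i x Hi Hx) as [H1 H2].
          destruct (floor_nat x) as [m Hm']; [lra|].
          exists m. split; [apply (nat_cell_le m R0 x); lra|]. split; auto. split; auto. }
      rewrite sum_mult_l. apply sum_Rle. intros m Hmm.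
      destruct (classic (exists z, Jset c d m z /\ E i z)) as [[z [Jz Ez]]|Hne].
      + apply Rmult_le_compat_r; [apply outer_nonneg|].
        apply Rle_trans with (Rmax 0 (g z)).
        * apply Rmax_lub; [apply Rmax_l|]. apply Rinf_le_pt; auto.
        * destruct Jz as [J1 J2]. specialize (Hg m z J1 J2).
          apply Rmax_lub; auto. apply Rle_trans with (Rabs (g z)); auto. apply RRle_abs.
      + rewrite outer_empty; [lra|]. intros x Hx. apply Hne; eauto.
    - rewrite sum_swap. unfold B. apply sum_Rle. intros m Hmm.
      rewrite <- sum_mult_l. apply Rmult_le_compat_l; auto.
      apply Rle_trans with (outer (Jset c d m)); [|apply Jset_outer].
      apply carat_sum.
      + intros; apply Hm; auto.
      + exact Hdj.
      + apply (has_cover_box _ c d). intros x [Hx _]; auto. }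
  assert (HJ : S (sum_f_R0 (fun m => Rinf (fun v => exists x, Jset c d m x /\ v = g x)
                                   * outer (Jset c d m)) R0)).
  { exists R0, (Jset c d). split; auto. split; [|split; [|split]].
    - intros; apply Jset_meas.
    - intros i x _ [Hx _]; auto.
    - intros x Hx. destruct (floor_nat x) as [m Hm']; [lra|].
      exists m. split; [apply (nat_cell_le m R0 x); lra|]. split; auto.
    - intros i j x _ _ [_ Hi] [_ Hj]. eapply nat_cell_unique; eauto. }
  assert (HL : - B <= sum_f_R0 (fun m => Rinf (fun v => exists x, Jset c d m x /\ v = g x)
                                   * outer (Jset c d m)) R0).
  { apply Rle_trans with (sum_f_R0 (fun m => - (G m * jlen c d m)) R0).
    { unfold B. rewrite sum_opp. lra. }
    apply sum_Rle. intros m Hm.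
    assert (Hi : - G m <= Rinf (fun v => exists x, Jset c d m x /\ v = g x)).
    { apply Rinf_ge; auto. intros v [x [[J1 J2] ->]]. specialize (Hg m x J1 J2).
      pose proof (Rle_abs (- g x)); rewrite Rabs_Ropp in H; lra. }
    pose proof (outer_nonneg (Jset c d m)). pose proof (Jset_outer c d m).
    pose proof (HG m). nra. }
  assert (Hb : bound S) by (exists B; intros s Hs; apply HU; auto).
  destruct (completeness S Hb (ex_intro S _ HJ)) as [l Hl].
  unfold Lint. fold S. rewrite (Rsup_lub S l Hl).
  assert (l <= B) by (apply (proj2 Hl); intros s Hs; apply HU; auto).
  pose proof (proj1 Hl _ HJ).
  apply Rabs_le. lra.
Qed.

Lemma div_nonneg u v : 0 <= u -> 0 < v -> 0 <= u / v.
Proof. intros; unfold Rdiv; apply Rmult_le_pos; [auto|left; apply Rinv_0_lt_compat; auto]. Qed.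

Lemma exp_le x y : x <= y -> exp x <= exp y.
Proof. intros [H|H]; [left; apply exp_increasing; auto|subst; lra]. Qed.

Lemma ln_le x y : 0 < x -> x <= y -> ln x <= ln y.
Proof. intros H [H1|H1]; [left; apply ln_increasing; auto|subst; lra]. Qed.

Lemma rpow_pos_eq b e : 0 < b -> rpow b e = Rpower b e.
Proof. intro H. unfold rpow. destruct Rlt_dec; [auto|lra]. Qed.

Lemma rpow_le_Rpower b e Q : 0 <= e -> 0 <= b -> b <= Q -> 0 < Q -> rpow b e <= Rpower Q e.
Proof.
  intros He Hb HbQ HQ. unfold rpow. destruct Rlt_dec.
  - apply Rle_Rpower_l; auto.
  - destruct Req_EM_T.
    + subst. rewrite Rpower_O; auto. lra.
    + unfold Rpower. left; apply exp_pos.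
Qed.

Lemma rpow_nonneg b e : 0 <= rpow b e.
Proof.
  unfold rpow. destruct Rlt_dec. unfold Rpower; left; apply exp_pos.
  destruct Req_EM_T; lra.
Qed.

Definition KK (a x y z : R) : R := Kern a x y z * rpow z (2 * a + 1).

Lemma KK_z0 a x y : 1/2 <= a -> KK a x y 0 = 0.
Proof.
  intro Ha. unfold KK, Kern. unfold rpow at 3.
  destruct Rlt_dec; [lra|]. destruct Req_EM_T; [lra|]. ring.
Qed.

Lemma P_bounds x y z : 0 < x -> 0 < y -> Rabs (x - y) <= z <= x + y ->
  0 <= (z ^ 2 - (x - y) ^ 2) * ((x + y) ^ 2 - z ^ 2) /\
  (z ^ 2 - (x - y) ^ 2) * ((x + y) ^ 2 - z ^ 2) <= 4 * z ^ 2 * (x * y) /\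
  (z ^ 2 - (x - y) ^ 2) * ((x + y) ^ 2 - z ^ 2) <= 16 * (x * y) ^ 2.
Proof.
  intros Hx Hy [H1 H2].
  assert (Hz : 0 <= z) by (pose proof (Rabs_pos (x - y)); lra).
  assert (A1 : (x - y) ^ 2 <= z ^ 2).
  { assert (Rabs (x - y) * Rabs (x - y) = (x - y) * (x - y)).
    { rewrite <- Rabs_mult. apply Rabs_pos_eq. pose proof (Rle_0_sqr (x - y)); unfold Rsqr in *; lra. }
    pose proof (Rabs_pos (x - y)). simpl. nra. }
  assert (A2 : z ^ 2 <= (x + y) ^ 2) by nra.
  assert (B1 : 0 <= z ^ 2 - (x - y) ^ 2) by lra.
  assert (B2 : 0 <= (x + y) ^ 2 - z ^ 2) by lra.
  assert (B3 : z ^ 2 - (x - y) ^ 2 <= 4 * (x * y)) by nra.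
  assert (B4 : (x + y) ^ 2 - z ^ 2 <= 4 * (x * y)) by nra.
  split; [apply Rmult_le_pos; auto|split].
  - assert (z ^ 2 - (x - y) ^ 2 <= z ^ 2) by (pose proof (pow2_ge_0 (x - y)); lra).
    replace (4 * z ^ 2 * (x * y)) with (z ^ 2 * (4 * (x * y))) by ring.
    apply Rmult_le_compat; auto.
  - replace (16 * (x * y) ^ 2) with ((4 * (x * y)) * (4 * (x * y))) by ring.
    apply Rmult_le_compat; auto.
Qed.

Lemma KK_core a x y z Q : 1/2 <= a -> 0 < x -> 0 < y -> 0 < z ->
  Rabs (x - y) <= z <= x + y ->
  0 < Q -> (z ^ 2 - (x - y) ^ 2) * ((x + y) ^ 2 - z ^ 2) <= Q ->
  Rabs (KK a x y z) <=
  Rabs (CGamma a) * exp ((a - 1/2) * ln Q + (2 * a + 1) * ln z - 2 * a * (ln x + ln y + ln z)).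
Proof.
  intros Ha Hx Hy Hz Hr HQ HPQ.
  destruct (P_bounds x y z Hx Hy Hr) as [HP0 _].
  unfold KK, Kern.
  rewrite (rpow_pos_eq (x * y * z)) by (apply Rmult_lt_0_compat; [nra|lra]).
  rewrite (rpow_pos_eq z) by lra.
  set (P := (z ^ 2 - (x - y) ^ 2) * ((x + y) ^ 2 - z ^ 2)) in *.
  assert (Hr1 := rpow_le_Rpower P (a - 1/2) Q ltac:(lra) HP0 HPQ HQ).
  assert (Hr0 := rpow_nonneg P (a - 1/2)).
  set (D := Rpower (x * y * z) (2 * a)).
  set (Z := Rpower z (2 * a + 1)).
  assert (HD : 0 < D) by (unfold D, Rpower; apply exp_pos).
  assert (HZ : 0 < Z) by (unfold Z, Rpower; apply exp_pos).
  replace (CGamma a * rpow P (a - 1 / 2) / D * Z) with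
    (CGamma a * (rpow P (a - 1 / 2) * (Z * / D))) by (field; lra).
  rewrite Rabs_mult. rewrite (Rabs_pos_eq (rpow P _ * _)).
  2:{ apply Rmult_le_pos; auto. apply Rmult_le_pos; [lra|left; apply Rinv_0_lt_compat; auto]. }
  apply Rmult_le_compat_l; [apply Rabs_pos|].
  replace ((a - 1/2) * ln Q + (2 * a + 1) * ln z - 2 * a * (ln x + ln y + ln z))
    with ((a - 1/2) * ln Q + ((2 * a + 1) * ln z + - (2 * a * (ln x + ln y + ln z)))) by ring.
  rewrite exp_plus, exp_plus, exp_Ropp.
  assert (ED : D = exp (2 * a * (ln x + ln y + ln z))).
  { unfold D, Rpower. rewrite ln_mult by nra. rewrite ln_mult by nra. auto. }
  rewrite <- ED. unfold Z. unfold Rpower in *.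
  apply Rmult_le_compat_r; auto.
  apply Rmult_le_pos; [left; apply exp_pos|left; apply Rinv_0_lt_compat; auto].
Qed.

Definition K1c (a : R) : R := Rabs (CGamma a) * 2 * Rpower 16 (a - 1/2).
Definition K2c (a : R) : R := Rabs (CGamma a) * Rpower 4 (a - 1/2).

Lemma K1c_nonneg a : 0 <= K1c a.
Proof. unfold K1c, Rpower. pose proof (exp_pos ((a - 1/2) * ln 16)). pose proof (Rabs_pos (CGamma a)). nra. Qed.
Lemma K2c_nonneg a : 0 <= K2c a.
Proof. unfold K2c, Rpower. pose proof (exp_pos ((a - 1/2) * ln 4)). pose proof (Rabs_pos (CGamma a)). nra. Qed.

Lemma KK_bound1 a x y z : 1/2 <= a -> 0 < x -> 0 < y -> Rabs (x - y) <= z <= x + y ->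
  Rabs (KK a x y z) <= K1c a / Rmin x y.
Proof.
  intros Ha Hx Hy Hr.
  assert (Hm : 0 < Rmin x y) by (unfold Rmin; destruct Rle_dec; lra).
  assert (H0 : 0 <= K1c a / Rmin x y) by (apply div_nonneg; [apply K1c_nonneg|auto]).
  destruct (Rle_lt_or_eq_dec 0 z) as [Hz|Hz].
  { pose proof (Rabs_pos (x - y)); lra. }
  2:{ subst. rewrite KK_z0; auto. rewrite Rabs_R0; auto. }
  destruct (P_bounds x y z Hx Hy Hr) as [_ [_ HP]].
  assert (Hxy : 0 < x * y) by (apply Rmult_lt_0_compat; auto).
  assert (0 < 16 * (x * y) ^ 2) by (simpl; nra).
  eapply Rle_trans; [apply (KK_core a x y z (16 * (x * y) ^ 2)); auto|].
  unfold K1c.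
  replace (Rabs (CGamma a) * 2 * Rpower 16 (a - 1/2) / Rmin x y) with
    (Rabs (CGamma a) * exp (ln 2 + (a - 1/2) * ln 16 - ln (Rmin x y))).
  2:{ unfold Rminus. rewrite !exp_plus, exp_Ropp, exp_ln by lra. rewrite exp_ln by auto.
      unfold Rpower. field. lra. }
  apply Rmult_le_compat_l; [apply Rabs_pos|].
  replace ((x * y) ^ 2) with ((x * y) * (x * y)) by ring.
  rewrite ln_mult by nra. rewrite ln_mult by nra. rewrite ln_mult by nra.
  apply exp_le.
  assert (ln z <= ln 2 + ln (Rmax x y)).
  { rewrite <- ln_mult by (try lra; unfold Rmax; destruct Rle_dec; lra).
    apply ln_le; auto. unfold Rmax; destruct Rle_dec; lra. }
  assert (ln x + ln y = ln (Rmin x y) + ln (Rmax x y)).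
  { unfold Rmin, Rmax; destruct Rle_dec; lra. }
  nra.
Qed.

Lemma KK_bound2 a x y z : 1/2 <= a -> 0 < x -> 0 < y -> Rabs (x - y) <= z <= x + y ->
  Rabs (KK a x y z) <= K2c a * Rpower z (2 * a) / Rpower (x * y) (a + 1/2).
Proof.
  intros Ha Hx Hy Hr.
  assert (H0 : 0 <= K2c a * Rpower z (2 * a) / Rpower (x * y) (a + 1/2)).
  { apply div_nonneg. apply Rmult_le_pos. apply K2c_nonneg. left; apply exp_pos. apply exp_pos. }
  destruct (Rle_lt_or_eq_dec 0 z) as [Hz|Hz].
  { pose proof (Rabs_pos (x - y)); lra. }
  2:{ subst. rewrite KK_z0; auto. rewrite Rabs_R0; auto. }
  destruct (P_bounds x y z Hx Hy Hr) as [_ [HP _]].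
  assert (Hxy : 0 < x * y) by (apply Rmult_lt_0_compat; auto).
  assert (0 < 4 * z ^ 2 * (x * y)) by (apply Rmult_lt_0_compat; auto; simpl; nra).
  eapply Rle_trans; [apply (KK_core a x y z (4 * z ^ 2 * (x * y))); auto|].
  unfold K2c.
  replace (Rabs (CGamma a) * Rpower 4 (a - 1/2) * Rpower z (2 * a) / Rpower (x * y) (a + 1/2)) with
    (Rabs (CGamma a) * exp ((a - 1/2) * ln 4 + 2 * a * ln z - (a + 1/2) * (ln x + ln y))).
  2:{ unfold Rminus. rewrite !exp_plus, exp_Ropp. unfold Rpower. rewrite ln_mult by lra.
      field. apply Rgt_not_eq, exp_pos. }
  apply Rmult_le_compat_l; [apply Rabs_pos|].
  rewrite (ln_mult (4 * z ^ 2)) by nra. rewrite (ln_mult 4) by nra.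
  replace (z ^ 2) with (z * z) by ring. rewrite (ln_mult z z) by lra.
  rewrite (ln_mult x y) by lra. apply Req_le. f_equal. field.
Qed.

Section Pow.
Variable a : R.
Hypothesis Ha : 1/2 <= a.

Definition Pw (u : R) : R := Rpower u (a + 1/2).

Lemma Pw_pos u : 0 < Pw u.
Proof. unfold Pw, Rpower. apply exp_pos. Qed.

Lemma Pw_mul u v : 0 < u -> 0 < v -> Pw (u * v) = Pw u * Pw v.
Proof. intros. unfold Pw. rewrite Rpower_mult_distr; auto. Qed.

Lemma Pw_mono u v : 0 < u -> u <= v -> Pw u <= Pw v.
Proof. intros. unfold Pw. apply Rle_Rpower_l; [lra|split; auto]. Qed.

Lemma Pw_one : Pw 1 = 1.
Proof. unfold Pw. unfold Rpower. rewrite ln_1. rewrite Rmult_0_r. apply exp_0. Qed.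

Lemma Pw_ge1 u : 1 <= u -> 1 <= Pw u.
Proof. intro. rewrite <- Pw_one. apply Pw_mono; lra. Qed.

Lemma Q_eq u : Rpower u (2 * a + 1) = Pw u * Pw u.
Proof. unfold Pw. rewrite <- Rpower_plus. f_equal. lra. Qed.

Lemma R2a_eq u : 0 < u -> Rpower u (2 * a) = Pw u * Pw u / u.
Proof.
  intro Hu. rewrite <- Q_eq. replace (2 * a + 1) with (2 * a + 1) by ring.
  rewrite Rpower_plus, Rpower_1 by auto. field. lra.
Qed.

Lemma Pw_ge_id u : 1 <= u -> u <= Pw u * Pw u.
Proof.
  intro Hu. rewrite <- Q_eq. rewrite Rpower_plus, Rpower_1 by lra.
  assert (1 <= Rpower u (2 * a)).
  { unfold Rpower. rewrite <- exp_0. apply exp_le. assert (0 <= ln u).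
    { rewrite <- ln_1. apply ln_le; lra. } nra. }
  nra.
Qed.

Lemma omega_lower n : Pw (INR n + 1) * Pw (INR n + 1) / (2 * a + 2) <= omega a n.
Proof.
  unfold omega. unfold Rdiv. apply Rmult_le_compat_r; [left; apply Rinv_0_lt_compat; lra|].
  pose proof (pos_INR n) as Hn.
  rewrite (rpow_pos_eq (INR n + 1)) by lra.
  replace (2 * a + 2) with ((2 * a + 1) + 1) by ring.
  rewrite Rpower_plus, Rpower_1 by lra. rewrite Q_eq.
  destruct n as [|n].
  - simpl. unfold rpow. destruct Rlt_dec; [lra|]. destruct Req_EM_T; [lra|]. lra.
  - rewrite (rpow_pos_eq (INR (S n))) by (apply lt_0_INR; lia).
    rewrite Rpower_plus, Rpower_1 by (apply lt_0_INR; lia). rewrite Q_eq.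
    assert (Pw (INR (S n)) <= Pw (INR (S n) + 1)) by (apply Pw_mono; [apply lt_0_INR; lia|lra]).
    pose proof (Pw_pos (INR (S n))).
    assert (Pw (INR (S n)) * Pw (INR (S n)) <= Pw (INR (S n) + 1) * Pw (INR (S n) + 1))
      by (apply Rmult_le_compat; lra).
    assert (Pw (INR (S n)) * Pw (INR (S n)) * INR (S n) <= Pw (INR (S n) + 1) * Pw (INR (S n) + 1) * INR (S n))
      by (apply Rmult_le_compat_r; lra).
    lra.
Qed.

Lemma omega_upper n : omega a n <= Pw (INR n + 1) * Pw (INR n + 1).
Proof.
  unfold omega. pose proof (pos_INR n) as Hn.
  rewrite (rpow_pos_eq (INR n + 1)) by lra.
  destruct n as [|n].
  - simpl. unfold rpow at 1. destruct Rlt_dec; [lra|]. destruct Req_EM_T; [lra|].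
    replace (0 + 1) with 1 by ring. rewrite Pw_one. unfold Rpower. rewrite ln_1, Rmult_0_r, exp_0.
    apply Rmult_le_reg_r with (2 * a + 2); [lra|]. field_simplify; lra.
  - rewrite (rpow_pos_eq (INR (S n))) by (apply lt_0_INR; lia).
    assert (H0 : 0 < INR (S n)) by (apply lt_0_INR; lia).
    destruct (MVT_cor2 (fun t => Rpower t (2 * a + 2)) (fun t => (2 * a + 2) * Rpower t (2 * a + 2 - 1))
               (INR (S n)) (INR (S n) + 1)) as [c [Hc1 Hc2]]; [lra| |].
    + intros c Hc. apply derivable_pt_lim_power. lra.
    + cbv beta in Hc1. rewrite Hc1. replace (2 * a + 2 - 1) with (2 * a + 1) by ring.
      rewrite <- Q_eq.
      replace (INR (S n) + 1 - INR (S n)) with 1 by ring.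
      assert (Rpower c (2 * a + 1) <= Rpower (INR (S n) + 1) (2 * a + 1)).
      { apply Rle_Rpower_l; lra. }
      apply Rmult_le_reg_r with (2 * a + 2); [lra|].
      unfold Rdiv. rewrite Rmult_assoc, Rinv_l, Rmult_1_r by lra. nra.
Qed.

End Pow.

Lemma count_sum (u : nat -> R) A B v K : 0 <= v -> (forall n, 0 <= u n <= v) ->
  (forall n, u n <> 0 -> A <= INR n <= B) ->
  sum_f_R0 u K <= Rmax 0 (B - A + 1) * v.
Proof.
  intros Hv Hu Hs.
  assert (G : sum_f_R0 u K <= Rmax 0 (Rmin B (INR K) - A + 1) * v).
  { induction K.
    - simpl. destruct (Req_dec (u 0%nat) 0) as [E|E].
      + rewrite E. apply Rmult_le_pos; [apply Rmax_l|auto].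
      + specialize (Hs _ E). simpl in Hs. specialize (Hu 0%nat).
        assert (Rmin B 0 = 0) by (unfold Rmin; destruct Rle_dec; lra).
        rewrite H. unfold Rmax; destruct Rle_dec; nra.
    - rewrite tech5. destruct (Req_dec (u (S K)) 0) as [E|E].
      + rewrite E, Rplus_0_r. eapply Rle_trans; [apply IHK|].
        apply Rmult_le_compat_r; auto. rewrite S_INR.
        unfold Rmax, Rmin; repeat destruct Rle_dec; lra.
      + specialize (Hs _ E). rewrite S_INR in Hs. specialize (Hu (S K)).
        eapply Rle_trans; [apply Rplus_le_compat; [apply IHK|apply (proj2 Hu)]|].
        rewrite S_INR.
        assert (Rmin B (INR K) = INR K) by (unfold Rmin; destruct Rle_dec; lra).
        assert (Rmin B (INR K + 1) = INR K + 1) by (unfold Rmin; destruct Rle_dec; lra).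
        rewrite H, H0. unfold Rmax; repeat destruct Rle_dec; nra. }
  eapply Rle_trans; [apply G|]. apply Rmult_le_compat_r; auto.
  unfold Rmax, Rmin; repeat destruct Rle_dec; lra.
Qed.

Section Beta.
Variable a y : R.
Hypothesis Ha : 1/2 <= a.
Hypothesis Hy : 0 < y.

Definition K1 : R := Rmax 1 (K1c a).
Definition K2 : R := K2c a.

Lemma K1_ge1 : 1 <= K1.
Proof. apply Rmax_l. Qed.
Lemma K2_nonneg : 0 <= K2.
Proof. apply K2c_nonneg. Qed.

Definition rng (n m : nat) : Prop :=
  INR m < INR n + 1 + y /\ y - INR n - 1 < INR m + 1 /\ INR n - y < INR m + 1.

Definition B1 (n : nat) : R := if Rle_dec y (INR n) then K1 / y else 2 * K1.
Definition B2 (n m : nat) : R :=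
  match n with
  | O => 2 * K1
  | _ => K2 * (Pw a (INR m + 1) * Pw a (INR m + 1) / (INR m + 1)) / (Pw a (INR n) * Pw a y)
  end.
Definition beta0 (n m : nat) : R := Rmin (2 * K1) (Rmin (B1 n) (B2 n m)).
Definition beta (n m : nat) : R :=
  if excluded_middle_informative (rng n m) then beta0 n m else 0.

Definition Wb (x : R) (m : nat) : R :=
  Rmin (K1 / Rmin x y) (K2 * Rpower (INR m + 1) (2 * a) / Rpower (x * y) (a + 1/2)).

Lemma Wb_nonneg x m : 0 < x -> 0 <= Wb x m.
Proof.
  intro Hx. unfold Wb. apply Rmin_glb.
  - apply div_nonneg. pose proof K1_ge1; lra. unfold Rmin; destruct Rle_dec; lra.
  - apply div_nonneg. apply Rmult_le_pos. apply K2_nonneg. left; unfold Rpower; apply exp_pos.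
    unfold Rpower; apply exp_pos.
Qed.

Lemma KK_W x z m : 0 < x -> Rabs (x - y) <= z <= x + y -> INR m <= z < INR m + 1 ->
  Rabs (KK a x y z) <= Wb x m.
Proof.
  intros Hx Hr Hm.
  destruct (Req_dec z 0) as [Hz|Hz].
  { subst. rewrite KK_z0, Rabs_R0 by auto. apply Wb_nonneg; auto. }
  assert (Hz' : 0 < z) by (pose proof (Rabs_pos (x - y)); lra).
  unfold Wb. apply Rmin_glb.
  - eapply Rle_trans; [apply KK_bound1; auto|].
    unfold Rdiv. apply Rmult_le_compat_r.
    + left; apply Rinv_0_lt_compat. unfold Rmin; destruct Rle_dec; lra.
    + apply Rmax_r.
  - eapply Rle_trans; [apply KK_bound2; auto|].
    unfold Rdiv. apply Rmult_le_compat_r; [left; apply Rinv_0_lt_compat; unfold Rpower; apply exp_pos|].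
    apply Rmult_le_compat_l; [apply K2_nonneg|].
    apply Rle_Rpower_l; lra.
Qed.

Lemma beta0_nonneg n m : 0 <= beta0 n m.
Proof.
  pose proof K1_ge1. pose proof K2_nonneg.
  unfold beta0. apply Rmin_glb; [lra|]. apply Rmin_glb.
  - unfold B1. destruct Rle_dec; [apply div_nonneg; lra|lra].
  - unfold B2. destruct n; [lra|]. apply div_nonneg.
    + apply Rmult_le_pos; auto. apply div_nonneg; [|pose proof (pos_INR m); lra].
      pose proof (Pw_pos a (INR m + 1)). nra.
    + pose proof (Pw_pos a (INR (S n))). pose proof (Pw_pos a y). nra.
Qed.

Lemma beta_nonneg n m : 0 <= beta n m.
Proof. unfold beta. destruct excluded_middle_informative; [apply beta0_nonneg|lra]. Qed.

Lemma Wb_jlen x n m : INR n <= x < INR n + 1 -> 0 < x ->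
  Wb x m * jlen (Rabs (x - y)) (x + y) m <= beta n m.
Proof.
  intros Hxn Hx.
  set (mu := Rmin x y).
  assert (Hmu : 0 < mu) by (unfold mu, Rmin; destruct Rle_dec; lra).
  assert (Hdc : x + y - Rabs (x - y) = 2 * mu).
  { unfold mu, Rmin, Rabs. destruct Rle_dec; destruct Rcase_abs; lra. }
  assert (J0 := jlen_nonneg (Rabs (x - y)) (x + y) m).
  assert (J1 : jlen (Rabs (x - y)) (x + y) m <= 1).
  { unfold jlen, Rmax, Rmin. repeat destruct Rle_dec; lra. }
  assert (J2 : jlen (Rabs (x - y)) (x + y) m <= 2 * mu).
  { unfold jlen. rewrite <- Hdc. unfold Rmax, Rmin. repeat destruct Rle_dec; lra. }
  assert (W0 := Wb_nonneg x m Hx).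
  assert (W1 : Wb x m <= K1 / mu) by apply Rmin_l.
  assert (W2 : Wb x m <= K2 * Rpower (INR m + 1) (2 * a) / Rpower (x * y) (a + 1/2)) by apply Rmin_r.
  assert (T2 : Wb x m * jlen (Rabs (x - y)) (x + y) m <= 2 * K1).
  { apply Rle_trans with (K1 / mu * (2 * mu)).
    - apply Rmult_le_compat; auto.
    - right. field. lra. }
  unfold beta. destruct excluded_middle_informative as [Hr|Hr].
  - unfold beta0. apply Rmin_glb; auto. apply Rmin_glb.
    + unfold B1. destruct Rle_dec as [Hyn|Hyn]; auto.
      assert (mu = y) by (unfold mu, Rmin; destruct Rle_dec; lra).
      rewrite H in W1. apply Rle_trans with (K1 / y * 1); [|lra].
      apply Rmult_le_compat; auto.
    + unfold B2. destruct n as [|n']; auto.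
      apply Rle_trans with (K2 * Rpower (INR m + 1) (2 * a) / Rpower (x * y) (a + 1/2) * 1).
      { apply Rmult_le_compat; auto. }
      rewrite Rmult_1_r. rewrite R2a_eq by (pose proof (pos_INR m); lra).
      fold (Pw a (x * y)). rewrite <- (Pw_mul a (INR (S n'))) by (try apply lt_0_INR; lia || lra).
      unfold Rdiv. apply Rmult_le_compat_l.
      { apply Rmult_le_pos; [apply K2_nonneg|]. apply div_nonneg; [|pose proof (pos_INR m); lra].
        pose proof (Pw_pos a (INR m + 1)). nra. }
      apply Rinv_le_contravar. apply Pw_pos.
      apply Pw_mono; auto. apply Rmult_lt_0_compat; [apply lt_0_INR; lia|auto].
      apply Rmult_le_compat_r; lra.
  - assert (Rmin (x + y) (INR m + 1) - Rmax (Rabs (x - y)) (INR m) <= 0).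
    { destruct (Rle_dec (Rmin (x + y) (INR m + 1) - Rmax (Rabs (x - y)) (INR m)) 0); auto.
      exfalso. apply Hr. unfold rng.
      assert (INR m < x + y) by (revert n0; unfold Rmin, Rmax; repeat destruct Rle_dec; lra).
      assert (Rabs (x - y) < INR m + 1) by (revert n0; unfold Rmin, Rmax; repeat destruct Rle_dec; lra).
      assert (y - x <= Rabs (x - y)) by (rewrite Rabs_minus_sym; apply Rle_abs).
      assert (x - y <= Rabs (x - y)) by apply Rle_abs.
      lra. }
    unfold jlen. rewrite Rmax_left by lra. lra.
Qed.

End Beta.

Section Sum.
Variable a y : R.
Hypothesis Ha : 1/2 <= a.
Hypothesis Hy : 0 < y.

Definition C0 : R :=
  10 * K1 a * (Pw a 3 * Pw a 3) + 4 * K2 a * (Pw a 2 * Pw a 2 * Pw a 2) + 12 * K1 a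
  + 6 * K2 a * (Pw a 2 * Pw a 2 * Pw a 4 * Pw a 5).

Lemma omega_nonneg n : 0 <= omega a n.
Proof.
  eapply Rle_trans; [|apply omega_lower; auto]. apply div_nonneg; [|lra].
  pose proof (Pw_pos a (INR n + 1)). nra.
Qed.

Lemma beta_le0 n m : beta a y n m <= beta0 a y n m.
Proof. unfold beta. destruct excluded_middle_informative; [lra|apply beta0_nonneg; auto]. Qed.

Lemma beta_rng n m : beta a y n m <> 0 -> rng y n m.
Proof. unfold beta. destruct excluded_middle_informative; auto. intro H; lra. Qed.

Lemma u_rng n m : omega a n * beta a y n m <> 0 -> rng y n m.
Proof.
  intro H. apply beta_rng. intro E. apply H. rewrite E. ring.
Qed.

Lemma u_nonneg n m : 0 <= omega a n * beta a y n m.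
Proof. apply Rmult_le_pos; [apply omega_nonneg|apply beta_nonneg; auto]. Qed.

Lemma omega_le_P n u : INR n + 1 <= u -> omega a n <= Pw a u * Pw a u.
Proof.
  intro H. eapply Rle_trans; [apply omega_upper; auto|].
  pose proof (pos_INR n).
  assert (Pw a (INR n + 1) <= Pw a u) by (apply Pw_mono; auto; lra).
  pose proof (Pw_pos a (INR n + 1)). apply Rmult_le_compat; lra.
Qed.

Lemma K1_nonneg : 0 <= K1 a.
Proof. pose proof (K1_ge1 a); lra. Qed.

Lemma Pw_mulE u v : 0 < u -> 0 < v -> Pw a (u * v) = Pw a u * Pw a v.
Proof. apply Pw_mul. Qed.

Lemma regime1 m K : let r := INR m + 1 in y <= r / 4 ->
  sum_f_R0 (fun n => omega a n * beta a y n m) K <= 10 * K1 a * (Pw a 3 * Pw a 3) * (Pw a r * Pw a r).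
Proof.
  intros r Hyr. assert (Hr : 1 <= r) by (unfold r; pose proof (pos_INR m); lra).
  pose proof (K1_ge1 a) as HK1.
  set (c := if Rle_dec y 1 then 2 * K1 a else K1 a / y).
  assert (Hc0 : 0 <= c) by (unfold c; destruct Rle_dec; [lra|apply div_nonneg; lra]).
  set (v := (Pw a 3 * Pw a r) * (Pw a 3 * Pw a r) * c).
  assert (Hv0 : 0 <= v).
  { unfold v. pose proof (Pw_pos a 3). pose proof (Pw_pos a r). apply Rmult_le_pos; auto; nra. }
  eapply Rle_trans.
  - apply (count_sum _ (r - 2 - y) (r + y) v K Hv0).
    + intro n. split; [apply u_nonneg|].
      destruct (Req_dec (omega a n * beta a y n m) 0) as [E|E]; [rewrite E; auto|].
      destruct (u_rng n m E) as [R1 [R2 R3]]. fold r in R1, R2, R3.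
      apply Rmult_le_compat.
      * apply omega_nonneg.
      * apply beta_nonneg; auto.
      * rewrite <- Pw_mulE by lra. apply omega_le_P. lra.
      * eapply Rle_trans; [apply beta_le0|]. unfold c. destruct Rle_dec.
        -- apply Rmin_l.
        -- unfold beta0. eapply Rle_trans; [apply Rmin_r|]. eapply Rle_trans; [apply Rmin_l|].
           unfold B1. destruct Rle_dec; [lra|]. exfalso. assert (INR m = r - 1) by (unfold r; ring). lra.
    + intros n E. destruct (u_rng n m E) as [R1 [R2 R3]]. assert (INR m = r - 1) by (unfold r; ring). lra.
  - replace (r + y - (r - 2 - y) + 1) with (2 * y + 3) by ring.
    rewrite Rmax_right by lra. unfold v, c.
    replace (Pw a 3 * Pw a r * (Pw a 3 * Pw a r)) with ((Pw a 3 * Pw a 3) * (Pw a r * Pw a r)) by ring.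
    assert (0 <= Pw a 3 * Pw a 3 * (Pw a r * Pw a r)).
    { pose proof (Pw_pos a 3). pose proof (Pw_pos a r). apply Rmult_le_pos; nra. }
    destruct Rle_dec.
    + replace (10 * K1 a * (Pw a 3 * Pw a 3) * (Pw a r * Pw a r)) with
        (10 * K1 a * ((Pw a 3 * Pw a 3) * (Pw a r * Pw a r))) by ring.
      set (X := Pw a 3 * Pw a 3 * (Pw a r * Pw a r)) in *.
      replace ((2 * y + 3) * (X * (2 * K1 a))) with (((2 * y + 3) * 2) * (K1 a * X)) by ring.
      replace (10 * K1 a * X) with (10 * (K1 a * X)) by ring.
      apply Rmult_le_compat_r; [apply Rmult_le_pos; lra|lra].
    + replace ((2 * y + 3) * (Pw a 3 * Pw a 3 * (Pw a r * Pw a r) * (K1 a / y))) with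
        (((2 * y + 3) / y) * K1 a * (Pw a 3 * Pw a 3 * (Pw a r * Pw a r))) by (field; lra).
      assert ((2 * y + 3) / y <= 5).
      { apply Rmult_le_reg_r with y; [lra|]. unfold Rdiv. rewrite Rmult_assoc, Rinv_l, Rmult_1_r by lra. lra. }
      replace (10 * K1 a * (Pw a 3 * Pw a 3) * (Pw a r * Pw a r)) with
        (10 * K1 a * ((Pw a 3 * Pw a 3) * (Pw a r * Pw a r))) by ring.
      assert (0 <= (2 * y + 3) / y) by (apply div_nonneg; lra).
      assert ((2 * y + 3) / y * K1 a <= 10 * K1 a) by nra.
      apply Rmult_le_compat_r; auto.
Qed.

Lemma B2_bound n m : (n <> 0)%nat ->
  beta0 a y n m <= K2 a * (Pw a (INR m + 1) * Pw a (INR m + 1) / (INR m + 1)) / (Pw a (INR n) * Pw a y).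
Proof.
  intro Hn. unfold beta0. eapply Rle_trans; [apply Rmin_r|]. eapply Rle_trans; [apply Rmin_r|].
  unfold B2. destruct n; [lia|]. lra.
Qed.

Lemma regime2a m K : let r := INR m + 1 in 4 * r <= y ->
  sum_f_R0 (fun n => omega a n * beta a y n m) K <= 4 * K2 a * (Pw a 2 * Pw a 2 * Pw a 2) * (Pw a r * Pw a r).
Proof.
  intros r Hyr. assert (Hr : 1 <= r) by (unfold r; pose proof (pos_INR m); lra).
  pose proof (K2_nonneg a) as HK2.
  set (P2 := Pw a 2). set (Pr := Pw a r).
  assert (HP2 := Pw_pos a 2). assert (HPr := Pw_pos a r). fold P2 Pr in HP2, HPr.
  set (v := K2 a * (P2 * P2 * P2) * (Pr * Pr) / r).
  assert (Hv0 : 0 <= v).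
  { unfold v. apply div_nonneg; [|lra]. apply Rmult_le_pos; [apply Rmult_le_pos|]; auto; nra. }
  eapply Rle_trans.
  - apply (count_sum _ (y - r - 1) (r + y) v K Hv0).
    + intro n. split; [apply u_nonneg|].
      destruct (Req_dec (omega a n * beta a y n m) 0) as [E|E]; [rewrite E; auto|].
      destruct (u_rng n m E) as [R1 [R2 R3]].
      assert (Hm : INR m = r - 1) by (unfold r; ring).
      assert (Hn2 : y / 2 <= INR n) by lra.
      assert (Hn0 : (n <> 0)%nat) by (intro; subst; simpl in Hn2; lra).
      assert (Hnp : 0 < INR n) by lra.
      set (Pn := Pw a (INR n)). set (Py := Pw a y).
      assert (HPn := Pw_pos a (INR n)). assert (HPy := Pw_pos a y). fold Pn Py in HPn, HPy.
      assert (Hom : omega a n <= (P2 * Py) * (P2 * Py)).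
      { unfold P2, Py. rewrite <- Pw_mulE by lra. apply omega_le_P. lra. }
      assert (Hyn : Py <= P2 * Pn).
      { unfold P2, Pn, Py. rewrite <- Pw_mulE by lra. apply Pw_mono; auto; lra. }
      assert (Hb : beta a y n m <= K2 a * (Pr * Pr / r) / (Pn * Py)).
      { eapply Rle_trans; [apply beta_le0|]. apply B2_bound; auto. }
      eapply Rle_trans.
      { apply Rmult_le_compat; [apply omega_nonneg|apply beta_nonneg; auto|exact Hom|exact Hb]. }
      replace (P2 * Py * (P2 * Py) * (K2 a * (Pr * Pr / r) / (Pn * Py)))
        with ((K2 a * (P2 * P2) * (Pr * Pr) / r) * (Py / Pn)) by (field; repeat split; lra).
      unfold v. replace (K2 a * (P2 * P2 * P2) * (Pr * Pr) / r) with
        ((K2 a * (P2 * P2) * (Pr * Pr) / r) * P2) by (field; lra).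
      apply Rmult_le_compat_l.
      * apply div_nonneg; [|lra]. apply Rmult_le_pos; [apply Rmult_le_pos|]; auto; nra.
      * apply Rmult_le_reg_r with Pn; auto. unfold Rdiv. rewrite Rmult_assoc, Rinv_l, Rmult_1_r by lra. lra.
    + intros n E. destruct (u_rng n m E) as [R1 [R2 R3]].
      assert (INR m = r - 1) by (unfold r; ring). lra.
  - replace (r + y - (y - r - 1) + 1) with (2 * r + 2) by ring.
    rewrite Rmax_right by lra. unfold v.
    replace ((2 * r + 2) * (K2 a * (P2 * P2 * P2) * (Pr * Pr) / r)) with
      (((2 * r + 2) / r) * (K2 a * (P2 * P2 * P2) * (Pr * Pr))) by (field; lra).
    replace (4 * K2 a * (P2 * P2 * P2) * (Pr * Pr)) with (4 * (K2 a * (P2 * P2 * P2) * (Pr * Pr))) by ring.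
    apply Rmult_le_compat_r.
    + apply Rmult_le_pos; [apply Rmult_le_pos|]; auto; nra.
    + apply Rmult_le_reg_r with r; [lra|]. unfold Rdiv. rewrite Rmult_assoc, Rinv_l, Rmult_1_r by lra. lra.
Qed.

Lemma regime2b m K : let r := INR m + 1 in r / 4 <= y -> y <= 4 * r ->
  sum_f_R0 (fun n => omega a n * beta a y n m) K <=
  (12 * K1 a + 6 * K2 a * (Pw a 2 * Pw a 2 * Pw a 4 * Pw a 5)) * (Pw a r * Pw a r).
Proof.
  intros r Hyr1 Hyr2. assert (Hr : 1 <= r) by (unfold r; pose proof (pos_INR m); lra).
  pose proof (K2_nonneg a) as HK2. pose proof (K1_ge1 a) as HK1.
  set (P2 := Pw a 2). set (P4 := Pw a 4). set (P5 := Pw a 5). set (Pr := Pw a r).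
  assert (HP2 := Pw_pos a 2). assert (HP4 := Pw_pos a 4). assert (HP5 := Pw_pos a 5).
  assert (HPr := Pw_pos a r). fold P2 P4 P5 Pr in HP2, HP4, HP5, HPr.
  set (D := K2 a * (P2 * P2 * P4 * P5)).
  assert (HD : 0 <= D) by (unfold D; apply Rmult_le_pos; auto; repeat apply Rmult_le_pos; lra).
  set (v := 2 * K1 a + D * (Pr * Pr) / r).
  assert (Hv0 : 0 <= v).
  { unfold v. assert (0 <= D * (Pr * Pr) / r) by (apply div_nonneg; [apply Rmult_le_pos; nra|lra]). lra. }
  eapply Rle_trans.
  - apply (count_sum _ 0 (5 * r) v K Hv0).
    + intro n. split; [apply u_nonneg|].
      destruct (Req_dec (omega a n * beta a y n m) 0) as [E|E]; [rewrite E; auto|].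
      destruct (u_rng n m E) as [R1 [R2 R3]].
      assert (Hm : INR m = r - 1) by (unfold r; ring).
      assert (0 <= D * (Pr * Pr) / r) by (apply div_nonneg; [apply Rmult_le_pos; nra|lra]).
      destruct (Nat.eq_dec n 0) as [Hn0|Hn0].
      * subst n. apply Rle_trans with (1 * (2 * K1 a)); [|unfold v; lra].
        apply Rmult_le_compat; [apply omega_nonneg|apply beta_nonneg; auto| |].
        -- replace 1 with (Pw a 1 * Pw a 1) by (rewrite Pw_one; ring). apply omega_le_P. simpl; lra.
        -- eapply Rle_trans; [apply beta_le0|]. apply Rmin_l.
      * assert (Hn1 : 1 <= INR n) by (apply (le_INR 1); lia).
        set (Pn := Pw a (INR n)). set (Py := Pw a y).
        assert (HPn := Pw_pos a (INR n)). assert (HPy := Pw_pos a y). fold Pn Py in HPn, HPy.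
        assert (Hom : omega a n <= (P2 * Pn) * (P2 * Pn)).
        { unfold P2, Pn. rewrite <- Pw_mulE by lra. apply omega_le_P. lra. }
        assert (Hry : Pr <= P4 * Py).
        { unfold P4, Py, Pr. rewrite <- Pw_mulE by lra. apply Pw_mono; auto; lra. }
        assert (Hnr : Pn <= P5 * Pr).
        { unfold P5, Pn, Pr. rewrite <- Pw_mulE by lra. apply Pw_mono; auto; lra. }
        assert (Hb : beta a y n m <= K2 a * (Pr * Pr / r) / (Pn * Py)).
        { eapply Rle_trans; [apply beta_le0|]. apply B2_bound; auto. }
        eapply Rle_trans.
        { apply Rmult_le_compat; [apply omega_nonneg|apply beta_nonneg; auto|exact Hom|exact Hb]. }
        replace (P2 * Pn * (P2 * Pn) * (K2 a * (Pr * Pr / r) / (Pn * Py)))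
          with ((K2 a * (P2 * P2) * Pr / r) * (Pn * (Pr / Py))) by (field; repeat split; lra).
        apply Rle_trans with ((K2 a * (P2 * P2) * Pr / r) * ((P5 * Pr) * P4)).
        -- apply Rmult_le_compat_l.
           ++ apply div_nonneg; [|lra]. apply Rmult_le_pos; [apply Rmult_le_pos|]; auto; nra.
           ++ apply Rmult_le_compat; try lra.
              ** apply div_nonneg; lra.
              ** apply Rmult_le_reg_r with Py; auto. unfold Rdiv. rewrite Rmult_assoc, Rinv_l, Rmult_1_r by lra. lra.
        -- unfold v, D. replace (K2 a * (P2 * P2) * Pr / r * (P5 * Pr * P4)) with (K2 a * (P2 * P2 * P4 * P5) * (Pr * Pr) / r) by (field; lra). lra.
    + intros n E. destruct (u_rng n m E) as [R1 [R2 R3]].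
      assert (INR m = r - 1) by (unfold r; ring). pose proof (pos_INR n). lra.
  - replace (5 * r - 0 + 1) with (5 * r + 1) by ring.
    rewrite Rmax_right by lra. unfold v.
    assert (Hrp : r <= Pr * Pr) by (unfold Pr; apply Pw_ge_id; auto).
    replace ((5 * r + 1) * (2 * K1 a + D * (Pr * Pr) / r)) with
      ((5 * r + 1) * 2 * K1 a + ((5 * r + 1) / r) * (D * (Pr * Pr))) by (field; lra).
    assert ((5 * r + 1) / r <= 6).
    { apply Rmult_le_reg_r with r; [lra|]. unfold Rdiv. rewrite Rmult_assoc, Rinv_l, Rmult_1_r by lra. lra. }
    assert (0 <= D * (Pr * Pr)) by (apply Rmult_le_pos; nra).
    assert ((5 * r + 1) / r * (D * (Pr * Pr)) <= 6 * (D * (Pr * Pr))) by (apply Rmult_le_compat_r; auto).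
    assert ((5 * r + 1) * 2 * K1 a <= 12 * K1 a * (Pr * Pr)).
    { apply Rle_trans with (12 * K1 a * r). nra. apply Rmult_le_compat_l; lra. }
    unfold D in *. lra.
Qed.

Lemma beta_sum m K :
  sum_f_R0 (fun n => omega a n * beta a y n m) K <= C0 * (Pw a (INR m + 1) * Pw a (INR m + 1)).
Proof.
  set (r := INR m + 1).
  assert (Hr : 1 <= r) by (unfold r; pose proof (pos_INR m); lra).
  pose proof (K2_nonneg a) as HK2. pose proof (K1_ge1 a) as HK1.
  assert (HPr := Pw_pos a r).
  assert (H3 := Pw_pos a 3). assert (H2 := Pw_pos a 2). assert (H4 := Pw_pos a 4). assert (H5 := Pw_pos a 5).
  assert (X3 : 0 <= Pw a 3 * Pw a 3) by nra.
  assert (X2 : 0 <= Pw a 2 * Pw a 2 * Pw a 2) by (assert (0 <= Pw a 2 * Pw a 2) by nra; nra).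
  assert (X4 : 0 <= Pw a 2 * Pw a 2 * Pw a 4 * Pw a 5).
  { assert (0 <= Pw a 2 * Pw a 2) by nra. assert (0 <= Pw a 2 * Pw a 2 * Pw a 4) by nra. nra. }
  assert (XR : 0 <= Pw a r * Pw a r) by nra.
  assert (T1 : 0 <= 10 * K1 a * (Pw a 3 * Pw a 3) * (Pw a r * Pw a r)).
  { apply Rmult_le_pos; auto. apply Rmult_le_pos; auto. lra. }
  assert (T2 : 0 <= 4 * K2 a * (Pw a 2 * Pw a 2 * Pw a 2) * (Pw a r * Pw a r)).
  { apply Rmult_le_pos; auto. apply Rmult_le_pos; auto. lra. }
  assert (T3 : 0 <= (12 * K1 a + 6 * K2 a * (Pw a 2 * Pw a 2 * Pw a 4 * Pw a 5)) * (Pw a r * Pw a r)).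
  { apply Rmult_le_pos; auto. assert (0 <= 6 * K2 a * (Pw a 2 * Pw a 2 * Pw a 4 * Pw a 5)).
    { apply Rmult_le_pos; auto. lra. } lra. }
  assert (E : C0 * (Pw a r * Pw a r) =
     10 * K1 a * (Pw a 3 * Pw a 3) * (Pw a r * Pw a r) + 4 * K2 a * (Pw a 2 * Pw a 2 * Pw a 2) * (Pw a r * Pw a r)
     + (12 * K1 a + 6 * K2 a * (Pw a 2 * Pw a 2 * Pw a 4 * Pw a 5)) * (Pw a r * Pw a r)) by (unfold C0; ring).
  rewrite E.
  destruct (Rle_dec y (r / 4)) as [Y1|Y1].
  - pose proof (regime1 m K Y1). fold r in H. lra.
  - destruct (Rle_dec (4 * r) y) as [Y2|Y2].
    + pose proof (regime2a m K Y2). fold r in H. lra.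
    + pose proof (regime2b m K) as H. cbv zeta in H. fold r in H. specialize (H ltac:(lra) ltac:(lra)). lra.
Qed.
End Sum.

Lemma sum_ge_term (u : nat -> R) i n : (forall k, 0 <= u k) -> (i <= n)%nat -> u i <= sum_f_R0 u n.
Proof.
  intros H Hi. induction n.
  - replace i with 0%nat by lia. simpl; lra.
  - destruct (Nat.eq_dec i (S n)).
    + subst. rewrite tech5. pose proof (cond_pos_sum u n H). lra.
    + rewrite tech5. specialize (IHn ltac:(lia)). specialize (H (S n)). lra.
Qed.

Lemma sum_extend (u : nat -> R) n1 n2 : (forall k, 0 <= u k) -> (n1 <= n2)%nat ->
  sum_f_R0 u n1 <= sum_f_R0 u n2.
Proof.
  intros H Hn. induction Hn; [lra|]. rewrite tech5. specialize (H (S m)). lra.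
Qed.

Lemma isum_partial_le (u : nat -> R) U n : infinite_sum u U -> (forall k, 0 <= u k) ->
  sum_f_R0 u n <= U.
Proof.
  intros Hu H. apply (growing_ineq (sum_f_R0 u)); auto.
  intro k. simpl. specialize (H (S k)). lra.
Qed.

Theorem mainTheorem5 (a : R) (Ha : 1/2 <= a) :
  exists C : R, 0 < C /\
    forall (f : R -> R) (N : R),
      meas_fun_Rplus f -> is_norm a f N ->
      forall y : R, 0 <= y ->
        exists N' : R, is_norm a (tau a y f) N' /\ N' <= C * N.
Proof.
  assert (HC0 : 0 <= C0 a).
  { unfold C0. pose proof (K1_ge1 a). pose proof (K2_nonneg a).
    pose proof (Pw_pos a 2). pose proof (Pw_pos a 3). pose proof (Pw_pos a 4). pose proof (Pw_pos a 5).
    assert (0 <= Pw a 3 * Pw a 3) by nra.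
    assert (0 <= Pw a 2 * Pw a 2) by nra.
    assert (0 <= Pw a 2 * Pw a 2 * Pw a 2) by nra.
    assert (0 <= Pw a 2 * Pw a 2 * Pw a 4) by nra.
    assert (0 <= Pw a 2 * Pw a 2 * Pw a 4 * Pw a 5) by nra.
    assert (0 <= K1 a * (Pw a 3 * Pw a 3)) by nra.
    assert (0 <= K2 a * (Pw a 2 * Pw a 2 * Pw a 2)) by nra.
    assert (0 <= K2 a * (Pw a 2 * Pw a 2 * Pw a 4 * Pw a 5)) by nra.
    lra. }
  assert (HC1 : 0 <= C0 a * (2 * a + 2)) by (apply Rmult_le_pos; lra).
  exists (C0 a * (2 * a + 2) + 1). split; [lra|].
  intros f N _ [s [Hs HN]] y Hy0.
  assert (Hs0 : forall m, 0 <= s m).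
  { intro m. destruct (Hs m) as [Hub _]. apply Rle_trans with (Rabs (f (INR m))); [apply Rabs_pos|].
    apply Hub. exists (INR m). split; [lra|auto]. }
  assert (Hsf : forall m z, INR m <= z < INR m + 1 -> Rabs (f z) <= s m).
  { intros m z Hz. apply (proj1 (Hs m)). exists z; auto. }
  assert (Hom0 : forall n, 0 <= omega a n) by (intro; apply omega_nonneg; auto).
  assert (HN0 : 0 <= N).
  { apply (isum_nonneg _ _ HN). intro k. apply Rmult_le_pos; auto. }
  destruct (Req_dec y 0) as [Hy|Hy].
  { subst y. exists N. split; [|assert (0 <= C0 a * (2 * a + 2) * N) by (apply Rmult_le_pos; lra); lra].
    replace (tau a 0 f) with f; [exists s; auto|].
    apply functional_extensionality. intro x. unfold tau. destruct Req_EM_T; [auto|lra]. }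
  assert (Hyp : 0 < y) by lra.
  destruct (floor_nat y) as [m0 Hm0]; [lra|].
  set (T := fun n => sum_f_R0 (fun m => s m * beta a y n m) (n + m0 + 1)%nat).
  assert (Hbeta0 : 1 <= beta a y 0 m0).
  { unfold beta. destruct excluded_middle_informative as [_|Hr].
    - unfold beta0, B2.
      unfold B1. destruct (Rle_dec y (INR 0)) as [h|h]; [simpl in h; lra|]. pose proof (K1_ge1 a). unfold Rmin; repeat destruct Rle_dec; lra.
    - exfalso. apply Hr. unfold rng. simpl INR. lra. }
  assert (Hsb : forall n m, 0 <= s m * beta a y n m).
  { intros. apply Rmult_le_pos; auto. apply beta_nonneg; auto. }
  assert (HT : forall n x, INR n <= x < INR n + 1 -> Rabs (tau a y f x) <= T n).
  { intros n x Hx. pose proof (pos_INR n) as Hn0.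
    unfold tau. destruct (Req_EM_T y 0) as [E|_]; [lra|].
    destruct (Req_EM_T x 0) as [Ex|Ex].
    - subst x. assert (n = 0%nat).
      { destruct n; auto. pose proof (lt_0_INR (S n) ltac:(lia)). lra. }
      subst n. apply Rle_trans with (s m0 * beta a y 0 m0).
      + pose proof (Hsf m0 y Hm0). pose proof (Hs0 m0). nra.
      + unfold T. apply (sum_ge_term (fun m => s m * beta a y 0 m)); auto. lia.
    - assert (Hxp : 0 < x) by lra.
      assert (Hrr : Rabs (x - y) <= x + y).
      { unfold Rabs; destruct Rcase_abs; lra. }
      eapply Rle_trans.
      + apply (Lint_bound _ (Rabs (x - y)) (x + y) (n + m0 + 1) (fun m => s m * Wb a y x m)).
        * split; [apply Rabs_pos|auto].
        * rewrite !plus_INR. simpl. lra.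
        * intro m. apply Rmult_le_pos; auto. apply Wb_nonneg; auto.
        * intros m z Hz Hm.
          replace (Kern a x y z * f z * rpow z (2 * a + 1)) with (KK a x y z * f z)
            by (unfold KK; ring).
          rewrite Rabs_mult. rewrite Rmult_comm.
          apply Rmult_le_compat; try apply Rabs_pos; auto.
          apply KK_W; auto.
      + unfold T. apply sum_Rle. intros m _.
        rewrite Rmult_assoc. apply Rmult_le_compat_l; auto.
        apply Wb_jlen; auto. }
  set (E := fun n v => exists x, INR n <= x < INR n + 1 /\ v = Rabs (tau a y f x)).
  assert (Hlub : forall n, {l | is_lub (E n) l}).
  { intro n. apply completeness.
    - exists (T n). intros v [x [Hx ->]]. apply HT; auto.
    - exists (Rabs (tau a y f (INR n))). exists (INR n). split; [lra|auto]. }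
  set (s' := fun n => proj1_sig (Hlub n)).
  assert (Hs'1 : forall n, is_lub (E n) (s' n)) by (intro n; unfold s'; destruct (Hlub n); auto).
  assert (Hs'0 : forall n, 0 <= s' n).
  { intro n. apply Rle_trans with (Rabs (tau a y f (INR n))); [apply Rabs_pos|].
    apply (proj1 (Hs'1 n)). exists (INR n). split; [lra|auto]. }
  assert (Hs'T : forall n, s' n <= T n).
  { intro n. apply (proj2 (Hs'1 n)). intros v [x [Hx ->]]. apply HT; auto. }
  set (Sp := fun K => sum_f_R0 (fun n => omega a n * s' n) K).
  assert (HSp : forall K, Sp K <= C0 a * (2 * a + 2) * N).
  { intro K. unfold Sp.
    apply Rle_trans with (sum_f_R0 (fun n => sum_f_R0 (fun m => omega a n * (s m * beta a y n m)) (K + m0 + 1)) K).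
    - apply sum_Rle. intros n Hn.
      apply Rle_trans with (omega a n * T n); [apply Rmult_le_compat_l; auto|].
      unfold T. rewrite sum_mult_l.
      apply (sum_extend (fun m => omega a n * (s m * beta a y n m))).
      + intro k. apply Rmult_le_pos; auto.
      + lia.
    - rewrite sum_swap.
      apply Rle_trans with (sum_f_R0 (fun m => C0 a * (2 * a + 2) * (omega a m * s m)) (K + m0 + 1)).
      + apply sum_Rle. intros m _.
        replace (sum_f_R0 (fun i => omega a i * (s m * beta a y i m)) K) with
          (s m * sum_f_R0 (fun i => omega a i * beta a y i m) K).
        2:{ rewrite sum_mult_l. apply sum_eq. intros; ring. }
        pose proof (beta_sum a y Ha Hyp m K) as HB.
        pose proof (omega_lower a Ha m) as HL.
        assert (Pw a (INR m + 1) * Pw a (INR m + 1) <= (2 * a + 2) * omega a m).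
        { apply Rmult_le_reg_r with (/ (2 * a + 2)).
          - apply Rinv_0_lt_compat; lra.
          - replace ((2 * a + 2) * omega a m * / (2 * a + 2)) with (omega a m) by (field; lra).
            exact HL. }
        assert (C0 a * (Pw a (INR m + 1) * Pw a (INR m + 1)) <= C0 a * ((2 * a + 2) * omega a m))
          by (apply Rmult_le_compat_l; auto).
        replace (C0 a * (2 * a + 2) * (omega a m * s m)) with
          (s m * (C0 a * ((2 * a + 2) * omega a m))) by ring.
        apply Rmult_le_compat_l; auto. lra.
      + rewrite <- sum_mult_l. apply Rmult_le_compat_l; auto.
        apply isum_partial_le; auto. intro k; apply Rmult_le_pos; auto. }
  assert (Hgr : Un_growing Sp).
  { intro k. unfold Sp. simpl. pose proof (Hom0 (S k)). pose proof (Hs'0 (S k)). nra. }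
  assert (Hub : has_ub Sp).
  { exists (C0 a * (2 * a + 2) * N). intros v [K ->]. apply HSp. }
  destruct (growing_cv Sp Hgr Hub) as [N' HN'].
  exists N'. split.
  - exists s'. split; auto.
  - assert (N' <= C0 a * (2 * a + 2) * N).
    { apply Rle_plus_epsilon. intros eps He. destruct (HN' eps He) as [K HK].
      specialize (HK K (le_n _)). specialize (HSp K). unfold Rdist in HK.
      apply Rabs_def2 in HK. lra. }
    lra.
Qed.
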